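(* Fix $\ell \in \mathbb{R}_{>0}$. The map $f \mapsto C(f)$ is one-to-one when restricted to barcodes of the form $f = \sum_{i=1}^n x^{\alpha_i}y^{\ell}$ (with $n\ge 0$ and $\alpha_i\in\mathbb{R}$ arbitrary), i.e. barcodes all of whose bars have lifespan $\ell$.
   Context: A barcode is a finite formal sum $f = \sum_{i=1}^n x^{\alpha_i}y^{\ell_i}$ with $\alpha_i \in \mathbb{R}$, $\ell_i \in \mathbb{R}_{>0}$ (a finite multiset of bars $x^{\alpha_i}y^{\ell_i}$). Its critical series is $C(f) = \sum_i x^{\alpha_i} - \sum_i x^{\alpha_i+\ell_i}$, a finite integer combination of symbols $x^g$, $g\in\mathbb{R}$. *)

(* Defs.v *)
From HB Require Import structures.
From mathcomp Require Import all_boot all_order all_algebra.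
From mathcomp Require Export reals.
Set Implicit Arguments. Unset Strict Implicit. Unset Printing Implicit Defensive.
Import Order.TTheory GRing.Theory Num.Theory.
Local Open Scope ring_scope.

(* A bar x^alpha y^ell is the pair (alpha, ell). A barcode is a finite
   multiset of bars, represented by a list of bars up to permutation
   (equality of barcodes = perm_eq), all of whose lifespans are positive. *)
Definition bar (R : realType) := (R * R)%type.

Definition is_barcode (R : realType) (f : seq (bar R)) : bool :=
  all (fun b => 0 < b.2) f.

(* The critical series C(f) = sum_i x^{alpha_i} - sum_i x^{alpha_i + ell_i},
   a finite integer combination of symbols x^g, represented by its
   coefficient function g |-> coefficient of x^g. *)
Definition crit (R : realType) (f : seq (bar R)) (g : R) : int :=
  (count (fun b : bar R => b.1 == g) f)%:Z
  - (count (fun b : bar R => b.1 + b.2 == g) f)%:Z.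

(* Main.v *)
Require Import Defs.
From mathcomp Require Import all_boot all_order all_algebra reals.
From mathcomp Require Import zify.
Import Order.TTheory GRing.Theory Num.Theory.
Local Open Scope ring_scope.

Lemma min_ex (R : realType) (P : pred R) (s : seq R) :
  has P s -> exists x, [/\ x \in s, P x & forall y, y \in s -> P y -> x <= y].
Proof.
elim: s => [|a s IH] //= /orP [Pa | Hs].
  case Hs: (has P s).
    have [x [xs Px Hx]] := IH Hs.
    case: (leP a x) => hax.
      exists a; split; rewrite ?mem_head // => y; rewrite inE => /orP [/eqP -> //|ys Py].
      exact: le_trans hax (Hx y ys Py).
    exists x; split; rewrite ?inE ?xs ?orbT // => y; rewrite inE => /orP [/eqP -> _|ys Py].
      exact: ltW.
    exact: Hx.
  exists a; split; rewrite ?mem_head // => y; rewrite inE => /orP [/eqP -> //|ys Py].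
  by move/hasPn: Hs => /(_ y ys); rewrite Py.
have [x [xs Px Hx]] := IH Hs.
case Pa: (P a).
  case: (leP a x) => hax.
    exists a; split; rewrite ?mem_head // => y; rewrite inE => /orP [/eqP -> //|ys Py].
    exact: le_trans hax (Hx y ys Py).
  exists x; split; rewrite ?inE ?xs ?orbT // => y; rewrite inE => /orP [/eqP -> _|ys Py].
    exact: ltW.
  exact: Hx.
exists x; split; rewrite ?inE ?xs ?orbT // => y; rewrite inE => /orP [/eqP ->|ys Py].
  by rewrite Pa.
exact: Hx.
Qed.

Lemma count_pair (R : realType) (l : R) (f : seq (bar R)) (a b : R) :
  all (fun x : bar R => x.2 == l) f ->
  count (pred1 (a, b)) f = ((b == l) * count (fun x : bar R => x.1 == a) f)%N.
Proof.
elim: f => [|[x y] f IH] /=; first by rewrite muln0.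
move=> /andP [/eqP yl H]; rewrite IH // mulnDr; congr (_ + _)%N.
rewrite yl xpair_eqE (eq_sym l b).
by case: (x == a); case: (b == l).
Qed.

Lemma count_shift (R : realType) (l : R) (f : seq (bar R)) (g : R) :
  all (fun x : bar R => x.2 == l) f ->
  count (fun b : bar R => b.1 + b.2 == g) f = count (fun x : bar R => x.1 == g - l) f.
Proof.
move=> /allP H; apply: eq_in_count => x /H /eqP ->.
by apply/eqP/eqP => [<-|->]; rewrite ?addrK ?subrK.
Qed.

Theorem proposition11 (R : realType) (l : R) (hl : 0 < l)
    (f1 f2 : seq (bar R)) :
  is_barcode f1 -> is_barcode f2 ->
  all (fun b : bar R => b.2 == l) f1 ->
  all (fun b : bar R => b.2 == l) f2 ->
  crit f1 = crit f2 -> perm_eq f1 f2.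
Proof.
move=> _ _ H1 H2 Hc.
pose m f g := count (fun x : bar R => x.1 == g) f.
pose d g : int := (m f1 g)%:Z - (m f2 g)%:Z.
have Hd : forall g, d g = d (g - l).
  move=> g; have := congr1 (fun F => F g) Hc; rewrite /crit /=.
  rewrite (@count_shift R l f1 g H1) (@count_shift R l f2 g H2) /d /m => E.
  move: E; set A := count _ f1; set B := count _ f1; set C := count _ f2; set D := count _ f2.
  move=> E; lia.
have Hd0 : forall g, d g = 0.
  move=> g; apply/eqP; apply/negPn/negP => dg.
  pose s := [seq x.1 | x <- f1 ++ f2].
  have ins : forall h, d h != 0 -> h \in s.
    move=> h dh; apply/mapP.
    case E1: (m f1 h == 0%N); case E2: (m f2 h == 0%N).
    - by move: dh; rewrite /d (eqP E1) (eqP E2).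
    - move/negbT: E2; rewrite /m -lt0n -has_count => /hasP [x xs /eqP <-].
      by exists x; rewrite // mem_cat xs orbT.
    - move/negbT: E1; rewrite /m -lt0n -has_count => /hasP [x xs /eqP <-].
      by exists x; rewrite // mem_cat xs.
    - move/negbT: E1; rewrite /m -lt0n -has_count => /hasP [x xs /eqP <-].
      by exists x; rewrite // mem_cat xs.
  have [x [xs Px Hx]] := @min_ex R (fun h => d h != 0) s
     (introT hasP (ex_intro2 _ _ g (ins g dg) dg)).
  have Px' : d (x - l) != 0 by rewrite -Hd.
  have := Hx _ (ins _ Px') Px'.
  move=> h; have hx : x - l < x by rewrite ltrBlDr ltrDl.
  by move: hx; rewrite ltNge h.
apply/allP => -[a b] _ /=.
rewrite (@count_pair R l f1 a b H1) (@count_pair R l f2 a b H2).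
have := Hd0 a; rewrite /d /m => /eqP; rewrite subr_eq0 => /eqP [->].
by [].
Qed.
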